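(* For fixed positive integer $t$, the two-variable function $(n,k)\mapsto\hat L_0(n,k,t)$ (on positive reals with $1<n/k<t$) has partial derivatives \[ \frac{\partial}{\partial k}\hat L_0(n,k,t)=-\frac{n}{k^2}\big(\log n-y_t(n/k)\big)+\frac{n}{k^2}-\frac1k\quad\text{and}\quad \frac{\partial}{\partial n}\hat L_0(n,k,t)=\frac{\log n-y_t(n/k)}{k}. \]
   Context: $d_i=2^{\binom i2}i!$. For positive integer $t$ and real $1<\rho<t$, $y_t(\rho)$ is defined by: $x_t(\rho),y_t(\rho)$ are the unique reals $x,y$ with $\sum_{i=1}^t e^{x+iy}d_i^{-1}=1$ and $\sum_{i=1}^t ie^{x+iy}d_i^{-1}=\rho$. $\tilde L_0(\rho,k,t)=\sup\{\rho\log(\rho k)-\log k-\rho+1-\sum_ip_i\log(p_id_i)\}$, the supremum over $(p_i)_{i=1}^t\in[0,1]^t$ with $\sum_ip_i=1$, $\sum_iip_i=\rho$ (with $0\log0=0$), and $\hat L_0(n,k,t)=\tilde L_0(n/k,k,t)$. Logarithms are natural. *)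

(* Defs.v *)
From Stdlib Require Import Reals ClassicalEpsilon.
From Coquelicot Require Import Coquelicot.
Open Scope R_scope.

Definition d (i : nat) : R := 2 ^ (i * (i - 1) / 2)%nat * INR (Factorial.fact i).

Definition sum1t (t : nat) (f : nat -> R) : R :=
  match t with O => 0 | S t' => sum_f_R0 (fun j => f (S j)) t' end.

Definition xy_sol (t : nat) (rho x y : R) : Prop :=
  sum1t t (fun i => exp (x + INR i * y) / d i) = 1 /\
  sum1t t (fun i => INR i * exp (x + INR i * y) / d i) = rho.

Definition y_t (t : nat) (rho : R) : R :=
  epsilon (inhabits 0) (fun y => exists x, xy_sol t rho x y).

Definition plogpd (p di : R) : R :=
  if Req_EM_T p 0 then 0 else p * ln (p * di).

Definition admissible (t : nat) (rho : R) (p : nat -> R) : Prop :=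
  (forall i, (1 <= i <= t)%nat -> 0 <= p i <= 1) /\
  sum1t t p = 1 /\ sum1t t (fun i => INR i * p i) = rho.

Definition Ltilde0_obj (rho k : R) (t : nat) (p : nat -> R) : R :=
  rho * ln (rho * k) - ln k - rho + 1 - sum1t t (fun i => plogpd (p i) (d i)).

Definition Ltilde0 (rho k : R) (t : nat) : R :=
  real (Lub_Rbar (fun v => exists p, admissible t rho p /\ v = Ltilde0_obj rho k t p)).

Definition Lhat0 (n k : R) (t : nat) : R := Ltilde0 (n / k) k t.

(* Main.v *)
Require Import Defs.
From Stdlib Require Import Reals.
From Coquelicot Require Import Coquelicot.
From Stdlib Require Import Lra Lia FunctionalExtensionality ClassicalEpsilon.
Open Scope R_scope.

Lemma sum1t_S m f : sum1t (S m) f = sum1t m f + f (S m).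
Proof. destruct m; simpl; [ring|reflexivity]. Qed.

Lemma sum1t_Sl m f : sum1t (S m) f = f 1%nat + sum1t m (fun i => f (S i)).
Proof.
  induction m. simpl; ring.
  rewrite sum1t_S, IHm, (sum1t_S m). ring.
Qed.

Lemma sum1t_ext t f g : (forall i, (1 <= i <= t)%nat -> f i = g i) ->
  sum1t t f = sum1t t g.
Proof.
  induction t; intros H. reflexivity.
  rewrite !sum1t_S, IHt, H; try lia; auto.
  intros; apply H; lia.
Qed.

Lemma sum1t_plus t f g : sum1t t (fun i => f i + g i) = sum1t t f + sum1t t g.
Proof. induction t. simpl; ring. rewrite !sum1t_S, IHt; ring. Qed.

Lemma sum1t_scal t c f : sum1t t (fun i => c * f i) = c * sum1t t f.
Proof. induction t. simpl; ring. rewrite !sum1t_S, IHt; ring. Qed.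

Lemma sum1t_const t c : sum1t t (fun _ => c) = INR t * c.
Proof. induction t. simpl; ring. rewrite !sum1t_S, IHt, S_INR; ring. Qed.

Lemma sum1t_le t f g : (forall i, (1 <= i <= t)%nat -> f i <= g i) ->
  sum1t t f <= sum1t t g.
Proof.
  induction t; intros H. simpl; lra.
  rewrite !sum1t_S. apply Rplus_le_compat.
  apply IHt; intros; apply H; lia. apply H; lia.
Qed.

Lemma sum1t_nonneg t f : (forall i, (1 <= i <= t)%nat -> 0 <= f i) -> 0 <= sum1t t f.
Proof.
  intros H. replace 0 with (sum1t t (fun _ => 0)).
  apply sum1t_le; auto. rewrite sum1t_const; ring.
Qed.

Lemma sum1t_term t f j : (forall i, (1 <= i <= t)%nat -> 0 <= f i) ->
  (1 <= j <= t)%nat -> f j <= sum1t t f.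
Proof.
  induction t; intros H Hj. lia.
  rewrite sum1t_S. destruct (Nat.eq_dec j (S t)).
  subst. assert (0 <= sum1t t f) by (apply sum1t_nonneg; intros; apply H; lia). lra.
  assert (f j <= sum1t t f) by (apply IHt; [intros; apply H|]; lia).
  assert (0 <= f (S t)) by (apply H; lia). lra.
Qed.

Lemma sum1t_cont t (f : nat -> R -> R) y0 :
  (forall i, continuity_pt (f i) y0) -> continuity_pt (fun y => sum1t t (fun i => f i y)) y0.
Proof.
  intros H. induction t.
  simpl. apply continuity_pt_const. intros a b; reflexivity.
  assert (E : (fun y => sum1t (S t) (fun i => f i y)) = (fun y => sum1t t (fun i => f i y) + f (S t) y)).
  { apply functional_extensionality; intros; apply sum1t_S. }
  rewrite E. apply (continuity_pt_plus (fun y => sum1t t (fun i => f i y)) (fun y => f (S t) y)); auto.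
Qed.

Lemma d_pos i : 0 < d i.
Proof. unfold d. apply Rmult_lt_0_compat. apply pow_lt; lra. apply INR_fact_lt_0. Qed.

Lemma d_ge1 i : 1 <= d i.
Proof.
  unfold d. rewrite <- (Rmult_1_l 1). apply Rmult_le_compat; try lra.
  apply pow_R1_Rle; lra.
  assert (1 <= Factorial.fact i)%nat by (pose proof (Factorial.lt_O_fact i); lia).
  apply le_INR in H. simpl in H. exact H.
Qed.

Lemma d_1 : d 1 = 1.
Proof. unfold d. simpl. ring. Qed.

Definition q (x y : R) (i : nat) := exp (x + INR i * y) / d i.

Lemma q_pos x y i : 0 < q x y i.
Proof. unfold q. apply Rdiv_lt_0_compat. apply exp_pos. apply d_pos. Qed.

Lemma gibbs_term p x y i : 0 <= p ->
  p * (x + INR i * y) + p - q x y i <= plogpd p (d i).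
Proof.
  intros Hp. unfold plogpd. destruct (Req_EM_T p 0).
  - subst. pose proof (q_pos x y i). lra.
  - assert (Hp' : 0 < p) by lra.
    pose proof (d_pos i) as Hd.
    pose proof (exp_ineq1_le (ln (q x y i / p))) as H.
    rewrite exp_ln in H by (apply Rdiv_lt_0_compat; [apply q_pos|lra]).
    unfold q in H. rewrite ln_div in H by (try apply Rdiv_lt_0_compat; try apply exp_pos; lra).
    rewrite ln_div in H by (try apply exp_pos; lra). rewrite ln_exp in H.
    rewrite ln_mult by lra.
    apply Rmult_le_compat_l with (r := p) in H; [|lra].
    unfold q. replace (p * (exp (x + INR i * y) / d i / p)) with (exp (x + INR i * y) / d i) in H by (field; lra).
    nra.
Qed.

Lemma xy_sum2 t x y : sum1t t (fun i => INR i * exp (x + INR i * y) / d i) =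
  sum1t t (fun i => INR i * q x y i).
Proof. apply sum1t_ext; intros; unfold q, Rdiv; ring. Qed.

Lemma gibbs t rho' p x y : admissible t rho' p -> sum1t t (q x y) = 1 ->
  x + rho' * y <= sum1t t (fun i => plogpd (p i) (d i)).
Proof.
  intros [Hp [H1 H2]] Hq.
  eapply Rle_trans; [|apply sum1t_le with (f := fun i => p i * (x + INR i * y) + p i - q x y i)].
  2:{ intros; apply gibbs_term; apply Hp; auto. }
  replace (sum1t t (fun i => p i * (x + INR i * y) + p i - q x y i)) with
    (x * sum1t t p + y * sum1t t (fun i => INR i * p i) + sum1t t p + (-1) * sum1t t (q x y)).
  rewrite H1, H2, Hq. lra.
  rewrite <- (sum1t_scal t x), <- (sum1t_scal t y), <- (sum1t_scal t (-1)), <- !sum1t_plus.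
  apply sum1t_ext; intros; ring.
Qed.

Lemma attain t rho x y : xy_sol t rho x y ->
  admissible t rho (q x y) /\ sum1t t (fun i => plogpd (q x y i) (d i)) = x + rho * y.
Proof.
  intros [H1 H2]. rewrite xy_sum2 in H2. fold (q x y) in H1.
  split; [split; [|split]|].
  - intros i Hi. split. apply Rlt_le, q_pos. rewrite <- H1.
    apply (sum1t_term t (q x y) i); auto. intros; apply Rlt_le, q_pos.
  - exact H1.
  - exact H2.
  - rewrite (sum1t_ext t _ (fun i => x * q x y i + y * (INR i * q x y i))).
    rewrite sum1t_plus, !sum1t_scal, H1, H2. ring.
    intros i _. unfold plogpd. destruct (Req_EM_T (q x y i) 0) as [e|_].
    pose proof (q_pos x y i); lra.
    replace (q x y i * d i) with (exp (x + INR i * y)).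
    rewrite ln_exp; ring. unfold q; field. pose proof (d_pos i); lra.
Qed.

Lemma value t rho k x y : xy_sol t rho x y ->
  Ltilde0 rho k t = rho * ln (rho * k) - ln k - rho + 1 - (x + rho * y).
Proof.
  intros Hs. destruct (attain t rho x y Hs) as [Ha Hv].
  unfold Ltilde0.
  rewrite (is_lub_Rbar_unique _ (Finite (rho * ln (rho * k) - ln k - rho + 1 - (x + rho * y)))).
  reflexivity.
  split.
  - intros v [p [Hp ->]]. simpl. unfold Ltilde0_obj.
    pose proof (gibbs t rho p x y Hp (proj1 Hs)). lra.
  - intros b Hb. apply Hb. exists (q x y). split; auto. unfold Ltilde0_obj. rewrite Hv. reflexivity.
Qed.

Lemma compare t rho x y rho' x' y' : xy_sol t rho x y -> xy_sol t rho' x' y' ->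
  x + rho' * y <= x' + rho' * y'.
Proof.
  intros Hs Hs'. destruct (attain t rho' x' y' Hs') as [Ha Hv].
  rewrite <- Hv. apply gibbs; auto. exact (proj1 Hs).
Qed.

Lemma exp_diff_pos a b : a <> b -> 0 < (exp a - exp b) * (a - b).
Proof.
  intros H. destruct (Rlt_or_le a b).
  - pose proof (exp_increasing a b H0). nra.
  - assert (b < a) by lra. pose proof (exp_increasing b a H1). nra.
Qed.

Lemma exp_diff_nonneg a b : 0 <= (exp a - exp b) * (a - b).
Proof.
  destruct (Req_dec a b). subst; lra. apply Rlt_le, exp_diff_pos; auto.
Qed.

Lemma mono t rho1 x1 y1 rho2 x2 y2 : (2 <= t)%nat ->
  xy_sol t rho1 x1 y1 -> xy_sol t rho2 x2 y2 -> y1 < y2 -> rho1 < rho2.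
Proof.
  intros Ht [A1 B1] [A2 B2] Hy.
  rewrite xy_sum2 in B1, B2. fold (q x1 y1) in A1. fold (q x2 y2) in A2.
  set (T := fun i => (q x2 y2 i - q x1 y1 i) * ((x2 - x1) + INR i * (y2 - y1))).
  assert (Hid : sum1t t T = (y2 - y1) * (rho2 - rho1)).
  { rewrite (sum1t_ext t T (fun i => (x2 - x1) * q x2 y2 i + (-(x2 - x1)) * q x1 y1 i
        + ((y2 - y1) * (INR i * q x2 y2 i) + (-(y2 - y1)) * (INR i * q x1 y1 i)))).
    rewrite !sum1t_plus, !sum1t_scal, A1, A2, B1, B2. ring.
    intros; unfold T; ring. }
  assert (HT : forall i, T i = (exp (x2 + INR i * y2) - exp (x1 + INR i * y1)) *
                 ((x2 + INR i * y2) - (x1 + INR i * y1)) / d i).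
  { intros; unfold T, q; field. pose proof (d_pos i); lra. }
  assert (Hnn : forall i, (1 <= i <= t)%nat -> 0 <= T i).
  { intros i _. rewrite HT. apply Rdiv_le_0_compat. apply exp_diff_nonneg. apply d_pos. }
  assert (Hpos : 0 < sum1t t T).
  { destruct (Req_dec (x2 + INR 1 * y2) (x1 + INR 1 * y1)) as [E|E].
    - apply Rlt_le_trans with (T 2%nat). rewrite HT. apply Rdiv_lt_0_compat.
      apply exp_diff_pos. simpl in *. lra. apply d_pos.
      apply sum1t_term; auto; lia.
    - apply Rlt_le_trans with (T 1%nat). rewrite HT. apply Rdiv_lt_0_compat.
      apply exp_diff_pos. auto. apply d_pos.
      apply sum1t_term; auto; lia. }
  rewrite Hid in Hpos. nra.
Qed.

Definition Zs t y := sum1t t (fun i => exp (INR i * y) / d i).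
Definition Ms t y := sum1t t (fun i => INR i * exp (INR i * y) / d i).
Definition Xs t y := - ln (Zs t y).
Definition Rs t y := sum1t t (fun i => INR i * exp (Xs t y + INR i * y) / d i).

Lemma Zs_pos t y : (1 <= t)%nat -> 0 < Zs t y.
Proof.
  intros Ht. unfold Zs. apply Rlt_le_trans with (exp (INR 1 * y) / d 1).
  apply Rdiv_lt_0_compat; [apply exp_pos|apply d_pos].
  apply (sum1t_term t (fun i => exp (INR i * y) / d i) 1); try lia.
  intros; apply Rdiv_le_0_compat; [apply Rlt_le, exp_pos|apply d_pos].
Qed.

Lemma exp_Xs t y i : (1 <= t)%nat -> exp (Xs t y + INR i * y) = exp (INR i * y) / Zs t y.
Proof.
  intros Ht. unfold Xs. rewrite exp_plus, exp_Ropp, exp_ln by (apply Zs_pos; auto).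
  unfold Rdiv; ring.
Qed.

Lemma sol_at t y : (1 <= t)%nat -> xy_sol t (Rs t y) (Xs t y) y.
Proof.
  intros Ht. split; [|reflexivity].
  pose proof (Zs_pos t y Ht).
  rewrite (sum1t_ext t _ (fun i => / Zs t y * (exp (INR i * y) / d i))).
  rewrite sum1t_scal. fold (Zs t y). field. lra.
  intros. rewrite exp_Xs by auto. field. split. pose proof (d_pos i); lra. lra.
Qed.

Lemma Rs_eq t y : (1 <= t)%nat -> Rs t y = Ms t y / Zs t y.
Proof.
  intros Ht. pose proof (Zs_pos t y Ht). unfold Rs.
  rewrite (sum1t_ext t _ (fun i => / Zs t y * (INR i * exp (INR i * y) / d i))).
  rewrite sum1t_scal. fold (Ms t y). field. lra.
  intros. rewrite exp_Xs by auto. field. split. pose proof (d_pos i); lra. lra.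
Qed.

Lemma bound_le c C E E' dd : 0 <= E <= E' -> c <= C -> 0 <= C -> 1 <= dd -> c * E / dd <= C * E'.
Proof.
  intros HE Hc HC Hd.
  assert (0 < / dd <= 1). { split. apply Rinv_0_lt_compat; lra. rewrite <- Rinv_1. apply Rinv_le_contravar; lra. }
  unfold Rdiv. destruct (Rle_or_lt c 0).
  { assert (c * E <= 0) by nra. assert (c * E * / dd <= 0) by nra. assert (0 <= C * E') by nra. lra. }
  assert (0 <= c * E) by nra.
  assert (c * E * / dd <= c * E) by nra.
  assert (c * E <= C * E) by nra. assert (C * E <= C * E') by nra. lra.
Qed.

Lemma bound_ge c C E E' dd : 0 <= E <= E' -> - C <= c -> 0 <= C -> 1 <= dd -> - (C * E') <= c * E / dd.
Proof.
  intros HE Hc HC Hd. assert (H := bound_le (-c) C E E' dd HE ltac:(lra) HC Hd).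
  unfold Rdiv in *. lra.
Qed.

Definition gs t rho y := sum1t t (fun i => (INR i - rho) * exp (INR i * y) / d i).

Lemma gs_eq t rho y : gs t rho y = Ms t y - rho * Zs t y.
Proof.
  replace (Ms t y - rho * Zs t y) with (Ms t y + (-rho) * Zs t y) by ring.
  unfold gs, Ms, Zs. rewrite <- sum1t_scal, <- sum1t_plus.
  apply sum1t_ext; intros; unfold Rdiv; ring.
Qed.

Lemma exp_le' a b : a <= b -> exp a <= exp b.
Proof. intros H. destruct (Req_dec a b). subst; lra. apply Rlt_le, exp_increasing; lra. Qed.

Lemma gs_low t rho : (2 <= t)%nat -> 1 < rho -> rho < INR t -> exists a, a <= 0 /\ gs t rho a < 0.
Proof.
  intros Ht H1 H2. destruct t as [|m]; [lia|].
  set (T := INR (S m)) in *.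
  assert (HT : 2 <= T) by (unfold T; replace 2 with (INR 2) by (simpl; ring); apply le_INR; lia).
  assert (Hm : INR m <= T) by (unfold T; apply le_INR; lia).
  set (u := (rho - 1) / (2 * (T * T))).
  assert (Hu : 0 < u) by (unfold u; apply Rdiv_lt_0_compat; nra).
  assert (Hu1 : u <= 1).
  { unfold u. assert (0 < 2 * (T * T)) by nra.
    apply Rmult_le_reg_r with (2 * (T * T)); auto.
    unfold Rdiv. rewrite Rmult_assoc, Rinv_l by lra. nra. }
  exists (ln u). split.
  { rewrite <- ln_1. apply ln_le; lra. }
  unfold gs. rewrite sum1t_Sl.
  assert (Hs : sum1t m (fun i => (INR (S i) - rho) * exp (INR (S i) * ln u) / d (S i))
               <= sum1t m (fun _ => T * exp (ln u + ln u))).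
  { apply sum1t_le. intros i Hi. apply bound_le.
    split. apply Rlt_le, exp_pos. apply exp_le'.
    assert (2 <= INR (S i)) by (replace 2 with (INR 2) by (simpl; ring); apply le_INR; lia).
    assert (ln u <= 0) by (rewrite <- ln_1; apply ln_le; lra). nra.
    assert (INR (S i) <= T) by (unfold T; apply le_INR; lia). lra. lra. apply d_ge1. }
  rewrite sum1t_const, exp_plus, exp_ln in Hs by lra.
  rewrite d_1 in *. simpl (INR 1) in *. rewrite Rmult_1_l, exp_ln by lra.
  assert (INR m * (T * (u * u)) <= T * T * (u * u)).
  { assert (0 <= T * (u * u)) by nra.
    replace (T * T * (u * u)) with (T * (T * (u * u))) by ring. nra. }
  assert (T * T * u = (rho - 1) / 2) by (unfold u; field; nra).
  nra.
Qed.

Lemma gs_high t rho : (2 <= t)%nat -> 1 < rho -> rho < INR t -> exists b, 0 <= b /\ 0 < gs t rho b.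
Proof.
  intros Ht H1 H2. destruct t as [|m]; [lia|].
  set (T := INR (S m)) in *.
  assert (HT : 2 <= T) by (unfold T; replace 2 with (INR 2) by (simpl; ring); apply le_INR; lia).
  assert (Hm : INR m <= T) by (unfold T; apply le_INR; lia).
  assert (Hm0 : 0 <= INR m) by apply pos_INR.
  set (D := d (S m)). assert (HD : 1 <= D) by apply d_ge1.
  set (v := 2 * (T * T) * D / (T - rho)).
  assert (Hv : 1 <= v).
  { unfold v. apply Rmult_le_reg_r with (T - rho). lra.
    unfold Rdiv. rewrite Rmult_assoc, Rinv_l by lra. 
    assert (T <= T * T) by nra. assert (T * T <= T * T * D) by nra. lra. }
  exists (ln v). split.
  { rewrite <- ln_1. apply ln_le; lra. }
  set (b := ln v).
  set (w := exp (INR m * b)). assert (Hw : 0 < w) by apply exp_pos.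
  unfold gs. rewrite sum1t_S.
  assert (Hs : sum1t m (fun _ => - (T * w))
               <= sum1t m (fun i => (INR i - rho) * exp (INR i * b) / d i)).
  { apply sum1t_le. intros i Hi. apply bound_ge.
    split. apply Rlt_le, exp_pos. apply exp_le'.
    assert (INR i <= INR m) by (apply le_INR; lia).
    assert (0 <= b) by (unfold b; rewrite <- ln_1; apply ln_le; lra). nra.
    assert (0 <= INR i) by apply pos_INR. lra. lra. apply d_ge1. }
  rewrite sum1t_const in Hs.
  fold T. fold D.
  replace (exp (T * b)) with (w * v).
  2:{ unfold T, w. rewrite S_INR. replace ((INR m + 1) * b) with (INR m * b + b) by ring.
    rewrite exp_plus. unfold b. rewrite exp_ln by lra. reflexivity. }
  replace ((T - rho) * (w * v) / D) with (2 * (T * T) * w).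
  2:{ unfold v. field. split; lra. }
  assert (INR m * (T * w) <= T * T * w).
  { assert (0 <= T * w) by nra.
    replace (T * T * w) with (T * (T * w)) by ring. nra. }
  assert (0 < T * T * w) by (apply Rmult_lt_0_compat; nra).
  lra.
Qed.

Lemma exists_sol t rho : (2 <= t)%nat -> 1 < rho -> rho < INR t -> exists x y, xy_sol t rho x y.
Proof.
  intros Ht H1 H2.
  destruct (gs_low t rho Ht H1 H2) as [a [Ha Hga]].
  destruct (gs_high t rho Ht H1 H2) as [b [Hb Hgb]].
  assert (Hab : a < b).
  { destruct (Rlt_or_le a b); auto. assert (a = 0) by lra. assert (b = 0) by lra. subst. lra. }
  assert (Hc : continuity (gs t rho)).
  { intros y. unfold gs. apply (sum1t_cont t (fun i y => (INR i - rho) * exp (INR i * y) / d i)).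
    intros i. apply continuity_pt_filterlim.
    apply (ex_derive_continuous (fun y => (INR i - rho) * exp (INR i * y) / d i)).
    auto_derive. auto. }
  destruct (IVT (gs t rho) a b Hc Hab Hga Hgb) as [y [_ Hy]].
  exists (Xs t y), y.
  assert (Ht1 : (1 <= t)%nat) by lia.
  replace rho with (Rs t y). apply sol_at; auto.
  rewrite Rs_eq by auto. rewrite gs_eq in Hy. pose proof (Zs_pos t y Ht1).
  apply Rmult_eq_reg_r with (Zs t y). 2: lra. field_simplify; lra.
Qed.

Definition Phi t rho := rho * ln rho - rho + 1 - Ltilde0 rho 1 t.

Lemma Phi_val t rho x y : xy_sol t rho x y -> Phi t rho = x + rho * y.
Proof.
  intros Hs. unfold Phi. rewrite (value t rho 1 x y Hs). rewrite Rmult_1_r, ln_1. ring.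
Qed.

Lemma Y_sol t rho : (2 <= t)%nat -> 1 < rho -> rho < INR t -> exists x, xy_sol t rho x (y_t t rho).
Proof.
  intros Ht H1 H2. unfold y_t. apply epsilon_spec.
  destruct (exists_sol t rho Ht H1 H2) as [x [y H]]. exists y, x; exact H.
Qed.

Lemma Y_cont t rho0 eps : (2 <= t)%nat -> 1 < rho0 -> rho0 < INR t -> 0 < eps ->
  exists delta, 0 < delta /\ forall rho', Rabs (rho' - rho0) < delta ->
    Rabs (y_t t rho' - y_t t rho0) < eps.
Proof.
  intros Ht H1 H2 He.
  assert (Ht1 : (1 <= t)%nat) by lia.
  destruct (Y_sol t rho0 Ht H1 H2) as [x0 Hs0].
  set (y0 := y_t t rho0) in *.
  set (a := Rs t (y0 - eps / 2)). set (b := Rs t (y0 + eps / 2)).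
  assert (Ha : a < rho0) by (apply (mono t a (Xs t (y0 - eps/2)) (y0 - eps/2) rho0 x0 y0); auto; [apply sol_at; auto| lra]).
  assert (Hb : rho0 < b) by (apply (mono t rho0 x0 y0 b (Xs t (y0 + eps/2)) (y0 + eps/2)); auto; [apply sol_at; auto| lra]).
  exists (Rmin (Rmin (rho0 - a) (b - rho0)) (Rmin (rho0 - 1) (INR t - rho0))).
  split. repeat apply Rmin_glb_lt; lra.
  intros rho' Hr.
  apply Rabs_def2 in Hr. destruct Hr as [Hr1 Hr2].
  assert (M1 := Rmin_l (Rmin (rho0 - a) (b - rho0)) (Rmin (rho0 - 1) (INR t - rho0))).
  assert (M2 := Rmin_r (Rmin (rho0 - a) (b - rho0)) (Rmin (rho0 - 1) (INR t - rho0))).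
  assert (M3 := Rmin_l (rho0 - a) (b - rho0)). assert (M4 := Rmin_r (rho0 - a) (b - rho0)).
  assert (M5 := Rmin_l (rho0 - 1) (INR t - rho0)). assert (M6 := Rmin_r (rho0 - 1) (INR t - rho0)).
  destruct (Y_sol t rho' Ht ltac:(lra) ltac:(lra)) as [x' Hs'].
  apply Rabs_def1.
  - destruct (Rlt_or_le (y_t t rho' - y0) eps); auto. exfalso.
    assert (b < rho') by (apply (mono t b (Xs t (y0 + eps/2)) (y0 + eps/2) rho' x' (y_t t rho')); auto; [apply sol_at; auto| lra]).
    lra.
  - destruct (Rlt_or_le (- eps) (y_t t rho' - y0)); auto. exfalso.
    assert (rho' < a) by (apply (mono t rho' x' (y_t t rho') a (Xs t (y0 - eps/2)) (y0 - eps/2)); auto; [apply sol_at; auto| lra]).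
    lra.
Qed.

Lemma Phi_deriv t rho0 : (2 <= t)%nat -> 1 < rho0 -> rho0 < INR t ->
  derivable_pt_lim (Phi t) rho0 (y_t t rho0).
Proof.
  intros Ht H1 H2 eps Heps.
  destruct (Y_cont t rho0 eps Ht H1 H2 Heps) as [d1 [Hd1 Hc]].
  assert (Hdp : 0 < Rmin d1 (Rmin (rho0 - 1) (INR t - rho0))) by (repeat apply Rmin_glb_lt; lra).
  exists (mkposreal _ Hdp). intros h Hh0 Hh. simpl in Hh.
  assert (M1 := Rmin_l d1 (Rmin (rho0 - 1) (INR t - rho0))).
  assert (M2 := Rmin_r d1 (Rmin (rho0 - 1) (INR t - rho0))).
  assert (M5 := Rmin_l (rho0 - 1) (INR t - rho0)). assert (M6 := Rmin_r (rho0 - 1) (INR t - rho0)).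
  assert (Hh' := Rabs_def2 _ _ Hh).
  destruct (Y_sol t rho0 Ht H1 H2) as [x0 Hs0].
  destruct (Y_sol t (rho0 + h) Ht ltac:(lra) ltac:(lra)) as [x' Hs'].
  set (y0 := y_t t rho0) in *. set (y' := y_t t (rho0 + h)) in *.
  assert (Hy : Rabs (y' - y0) < eps).
  { apply Hc. replace (rho0 + h - rho0) with h by ring. lra. }
  apply Rabs_def2 in Hy.
  rewrite (Phi_val t _ _ _ Hs0), (Phi_val t _ _ _ Hs').
  pose proof (compare t rho0 x0 y0 (rho0 + h) x' y' Hs0 Hs').
  pose proof (compare t (rho0 + h) x' y' rho0 x0 y0 Hs' Hs0).
  set (D := x' + (rho0 + h) * y' - (x0 + rho0 * y0)) in *.
  set (r := D / h - y0).
  assert (Hr : r * h = D - h * y0) by (unfold r; field; auto).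
  assert (Hlo : 0 <= r * h) by (rewrite Hr; unfold D; lra).
  assert (Hhi : r * h <= h * (y' - y0)) by (rewrite Hr; unfold D; lra).
  apply Rabs_def1.
  - destruct (Rlt_or_le 0 h).
    + assert (r <= y' - y0) by nra. lra.
    + assert (h < 0) by lra. assert (r <= 0) by nra. lra.
  - destruct (Rlt_or_le 0 h).
    + assert (0 <= r) by nra. lra.
    + assert (h < 0) by lra. assert (y' - y0 <= r) by nra. lra.
Qed.

Lemma Lform t n k : (2 <= t)%nat -> 0 < k -> 1 < n / k -> n / k < INR t ->
  Lhat0 n k t = n / k * ln n - ln k - n / k + 1 - Phi t (n / k).
Proof.
  intros Ht Hk H1 H2. destruct (Y_sol t (n / k) Ht H1 H2) as [x Hs].
  unfold Lhat0. rewrite (value t (n/k) k x _ Hs), (Phi_val t _ _ _ Hs).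
  replace (n / k * k) with n by (field; lra). ring.
Qed.

Lemma t_ge2 t n k : 1 < n / k -> n / k < INR t -> (2 <= t)%nat.
Proof.
  intros H1 H2. destruct t as [|[|t]]; simpl in H2; try lra. lia.
Qed.

Theorem lemma35 (t : nat) (n k : R) :
  (1 <= t)%nat -> 0 < n -> 0 < k -> 1 < n / k -> n / k < INR t ->
  is_derive (fun k' => Lhat0 n k' t) k
    (- (n / k ^ 2) * (ln n - y_t t (n / k)) + n / k ^ 2 - 1 / k) /\
  is_derive (fun n' => Lhat0 n' k t) n
    ((ln n - y_t t (n / k)) / k).
Proof.
  intros _ Hn Hk H1 H2.
  assert (Ht := t_ge2 t n k H1 H2).
  assert (HP : is_derive (Phi t) (n / k) (y_t t (n / k))).
  { apply is_derive_Reals. apply Phi_deriv; auto. }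
  assert (HO : locally (n / k) (fun r => 1 < r /\ r < INR t)).
  { apply (open_and _ _ (open_gt 1) (open_lt (INR t))). split; auto. }
  split.
  - apply is_derive_ext_loc with (f := fun k' => (n / k' * ln n - ln k' - n / k' + 1) - Phi t (n / k')).
    + assert (Hc : continuous (fun k' => n / k') k).
      { apply (ex_derive_continuous (fun k' => n / k')). auto_derive. lra. }
      assert (L1 := Hc _ HO). unfold filtermap in L1.
      assert (L2 : locally k (fun k' => 0 < k')) by (apply (open_gt 0); auto).
      generalize (filter_and _ _ L1 L2). apply filter_imp.
      intros k' [[A B] C]. symmetry. apply Lform; auto.
    + assert (HA : is_derive (fun k' => n / k' * ln n - ln k' - n / k' + 1) k
               (- (n / k ^ 2) * ln n - 1 / k + n / k ^ 2)).
      { auto_derive. repeat split; lra. field. lra. }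
      assert (Hd : is_derive (fun k' => n / k') k (- (n / k ^ 2))).
      { auto_derive. lra. field. lra. }
      assert (HB := is_derive_comp (Phi t) (fun k' => n / k') k _ _ HP Hd).
      assert (HM := is_derive_minus _ _ k _ _ HA HB).
      replace (- (n / k ^ 2) * (ln n - y_t t (n / k)) + n / k ^ 2 - 1 / k)
        with (minus (- (n / k ^ 2) * ln n - 1 / k + n / k ^ 2) (scal (- (n / k ^ 2)) (y_t t (n / k)))).
      * eapply is_derive_ext; [|exact HM]. intros; reflexivity.
      * unfold minus, plus, opp, scal; simpl. unfold mult; simpl. field. lra.
  - apply is_derive_ext_loc with (f := fun n' => (n' / k * ln n' - ln k - n' / k + 1) - Phi t (n' / k)).
    + assert (Hc : continuous (fun n' => n' / k) n).
      { apply (ex_derive_continuous (fun n' => n' / k)). auto_derive. lra. }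
      assert (L1 := Hc _ HO). unfold filtermap in L1.
      generalize L1. apply filter_imp.
      intros n' [A B]. symmetry. apply Lform; auto.
    + assert (HA : is_derive (fun n' => n' / k * ln n' - ln k - n' / k + 1) n
               (ln n / k)).
      { auto_derive. repeat split; lra. field. lra. }
      assert (Hd : is_derive (fun n' => n' / k) n (/ k)).
      { auto_derive. lra. field. lra. }
      assert (HB := is_derive_comp (Phi t) (fun n' => n' / k) n _ _ HP Hd).
      assert (HM := is_derive_minus _ _ n _ _ HA HB).
      replace ((ln n - y_t t (n / k)) / k)
        with (minus (ln n / k) (scal (/ k) (y_t t (n / k)))).
      * eapply is_derive_ext; [|exact HM]. intros; reflexivity.
      * unfold minus, plus, opp, scal; simpl. unfold mult; simpl. field. lra.
Qed.
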